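(* Let $0\to M\xrightarrow{i}\Lambda\xrightarrow{d}B\to0$ be an exact sequence of lattices, $P\subset\Lambda_\mathbb{Q}$ a polyhedron, and $F\subset P$ an $M$-stable face. Then $(N_{F_M}P_M)^\vee=(N_FP)^\vee\cap M_\mathbb{Q}$.
   Context: Notation: $P_M=P\cap M_\mathbb{Q}$, $F_M=F\cap M_\mathbb{Q}$ (identifying $M$ with $i(M)$). For $y\in\Lambda^\vee_\mathbb{Q}$, $\mathrm{face}_y(P)=\{x\in P:\langle x,y\rangle=\min_P\langle-,y\rangle\}$; faces are the nonempty sets of this form; $N_FP=\{y\in\Lambda^\vee_\mathbb{Q}:\mathrm{face}_y(P)\supset F\}$, and analogously $N_{F_M}P_M\subset M^\vee_\mathbb{Q}$. For a cone $\sigma$ in a dual space, $\sigma^\vee$ denotes the dual cone $\{x:\langle x,\sigma\rangle\ge0\}$. $\langle F\rangle$ is the span of the differences of elements of $F$; $F$ is $M$-stable if the relative interior of $F$ meets $M_\mathbb{Q}$ and $\langle F\rangle+M_\mathbb{Q}=\Lambda_\mathbb{Q}$. *)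

(* Defs.v *)
From HB Require Import structures.
From mathcomp Require Import all_boot all_order all_algebra.
Set Implicit Arguments. Unset Strict Implicit. Unset Printing Implicit Defensive.
Import Order.TTheory GRing.Theory Num.Theory.
Local Open Scope ring_scope.

(* Lattices are modelled as Z^r = 'rV[int]_r (every lattice is free of finite
   rank); L_Q = L (x) Q is 'rV[rat]_r, and its dual L^v_Q is again 'rV[rat]_r
   with the standard pairing. *)

Definition qset (r : nat) := 'rV[rat]_r -> Prop.

Definition pair (r : nat) (x y : 'rV[rat]_r) : rat := \sum_(j < r) x 0 j * y 0 j.

Definition is_polyhedron (r : nat) (P : qset r) : Prop :=
  exists (s : nat) (A : 'I_s -> 'rV[rat]_r) (b : 'I_s -> rat),
    forall x, P x <-> (forall k, b k <= pair x (A k)).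

Definition face_y (r : nat) (y : 'rV[rat]_r) (P : qset r) : qset r :=
  fun x => P x /\ forall p, P p -> pair x y <= pair p y.

Definition is_face (r : nat) (P F : qset r) : Prop :=
  (exists y, forall x, F x <-> face_y y P x) /\ (exists x, F x).

Definition normal_cone (r : nat) (P F : qset r) : qset r :=
  fun y => forall x, F x -> face_y y P x.

Definition dual_cone (r : nat) (sigma : qset r) : qset r :=
  fun x => forall y, sigma y -> 0 <= pair x y.

Definition span_diff (r : nat) (F : qset r) : qset r :=
  fun v => exists (s : nat) (c : 'I_s -> rat) (a b : 'I_s -> 'rV[rat]_r),
    (forall k, F (a k) /\ F (b k)) /\ v = \sum_(k < s) c k *: (a k - b k).

Definition relint (r : nat) (F : qset r) : qset r :=
  fun x => F x /\ exists e : rat, 0 < e /\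
    forall v, span_diff F v -> (forall j, `|v 0 j| <= e) -> F (x + v).

Definition mxQ (p q : nat) (A : 'M[int]_(p, q)) : 'M[rat]_(p, q) := map_mx intr A.

(* 0 -> Z^m --i--> Z^n --d--> Z^k -> 0 is exact (maps act on row vectors) *)
Definition short_exact (m n k : nat) (i : 'M[int]_(m, n)) (d : 'M[int]_(n, k)) : Prop :=
  [/\ (forall u : 'rV[int]_m, u *m i = 0 -> u = 0),
      (forall w : 'rV[int]_k, exists v : 'rV[int]_n, v *m d = w) &
      (forall v : 'rV[int]_n, v *m d = 0 <-> exists u : 'rV[int]_m, v = u *m i)].

(* pullback of a subset of Lambda_Q to M_Q along i (i.e. S ∩ M_Q, identifying
   M with i(M)) *)
Definition restrict (m n : nat) (i : 'M[int]_(m, n)) (S : qset n) : qset m :=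
  fun u => S (u *m mxQ i).

Definition M_stable (m n : nat) (i : 'M[int]_(m, n)) (F : qset n) : Prop :=
  (exists u : 'rV[rat]_m, relint F (u *m mxQ i)) /\
  (forall x : 'rV[rat]_n, exists v (u : 'rV[rat]_m), span_diff F v /\ x = v + u *m mxQ i).

(* Main.v *)
Require Import Defs.
From mathcomp Require Import all_boot all_order all_algebra lra.
Import Order.TTheory GRing.Theory Num.Theory.
Local Open Scope ring_scope.

Lemma small_pos (s : nat) (f : 'I_s -> rat) : (forall k, 0 < f k) ->
  exists e : rat, 0 < e /\ forall k, e <= f k.
Proof.
move=> H; exists (\big[Order.min/1]_(k < s) f k); split.
  by elim/big_ind: _ => // x y hx hy; rewrite lt_min hx hy.
by move=> k; apply: bigmin_le.
Qed.

Lemma pairE r (x y : 'rV[rat]_r) : pair x y = (x *m y^T) 0 0.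
Proof. by rewrite /pair mxE; apply: eq_bigr => j _; rewrite mxE. Qed.

Lemma pair_lin r (x w a : 'rV[rat]_r) (c : rat) : pair (x + c *: w) a = pair x a + c * pair w a.
Proof. by rewrite !pairE mulmxDl -scalemxAl !mxE. Qed.

Lemma pair_sub r (x w a : 'rV[rat]_r) : pair (x - w) a = pair x a - pair w a.
Proof. by rewrite !pairE mulmxBl !mxE. Qed.

Lemma pair_mul m n (u : 'rV[rat]_m) (I : 'M[rat]_(m, n)) a :
  pair (u *m I) a = pair u (a *m I^T).
Proof. by rewrite !pairE trmx_mul trmxK mulmxA. Qed.

Lemma tangent r s (A : 'I_s -> 'rV[rat]_r) (b : 'I_s -> rat) x0 w :
  (forall k, b k <= pair x0 (A k)) ->
  (forall k, pair x0 (A k) = b k -> 0 <= pair w (A k)) ->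
  exists e : rat, 0 < e /\ forall k, b k <= pair (x0 + e *: w) (A k).
Proof.
move=> H0 Hw.
pose f := fun k => if pair x0 (A k) == b k then 1
   else (pair x0 (A k) - b k) / (1 + `|pair w (A k)|).
have fpos : forall k, 0 < f k.
  move=> k; rewrite /f; case: eqP => [//|ne]; apply: divr_gt0; last by rewrite ltr_pwDl.
  by rewrite subr_gt0 lt_neqAle H0 andbT; apply/eqP => h; apply: ne.
have [e [e0 He]] := @small_pos s f fpos.
exists e; split => // k; rewrite pair_lin; have := He k; rewrite /f.
case: eqP => [act _|ne].
  by rewrite act lerDl; apply: mulr_ge0; [exact: ltW | exact: Hw].
have pos : 0 < 1 + `|pair w (A k)| by rewrite ltr_pwDl.
move=> h; have := ler_wpM2r (ltW pos) h; rewrite divfK ?gt_eqF // => {}h.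
have := ler_norm (- pair w (A k)); rewrite normrN.
set p := pair w (A k); set q := `|p| => hq.
have : 0 <= q + p by lra.
move/(mulr_ge0 (ltW e0)); rewrite mulrDr mulrDr mulr1 in h *; rewrite -/p -/q in h; lra.
Qed.

Theorem mainTheorem6 (m n k : nat) (i : 'M[int]_(m, n)) (d : 'M[int]_(n, k))
  (P F : qset n) :
  short_exact i d ->
  is_polyhedron P ->
  is_face P F ->
  M_stable i F ->
  forall u : 'rV[rat]_m,
    dual_cone (normal_cone (restrict i P) (restrict i F)) u <->
    dual_cone (normal_cone P F) (u *m mxQ i).
Proof.
move=> _ [s [A [b hP]]] [[y0 hy0] _] [[u0 [Fx0 [e [e0 He]]]] _] u.
set I := mxQ i; set x0 := u0 *m I.
have FP : forall x, F x -> P x by move=> x /hy0 [].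
have L1 : forall x, F x -> forall k, pair x0 (A k) = b k -> pair x (A k) = b k.
  move=> x Fx k0 act.
  pose f := fun j : 'I_n => e / (1 + `|x0 0 j - x 0 j|).
  have fpos : forall j, 0 < f j.
    by move=> j; rewrite /f divr_gt0 // ltr_pwDl.
  have [eps [eps0 Heps]] := @small_pos n f fpos.
  have Fv : F (x0 + eps *: (x0 - x)).
    apply: He.
      exists 1%N, (fun _ => eps), (fun _ => x0), (fun _ => x); split.
        by move=> _; split.
      by rewrite big_ord1.
    move=> j; have -> : (eps *: (x0 - x)) 0 j = eps * (x0 0 j - x 0 j) by rewrite !mxE.
    rewrite normrM (gtr0_norm eps0).
    have pos : 0 < 1 + `|x0 0 j - x 0 j| by rewrite ltr_pwDl.
    have := ler_wpM2r (ltW pos) (Heps j); rewrite /f divfK ?gt_eqF // => h.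
    set t := `|x0 0 j - x 0 j| in h *.
    have : 0 <= eps by exact: ltW.
    rewrite mulrDr mulr1 in h; lra.
  have := (proj1 (hP _) (FP _ Fv)) k0; rewrite pair_lin pair_sub act => h1.
  have h2 : 0 <= eps * (b k0 - pair x (A k0)) by lra.
  rewrite pmulr_rge0 // in h2.
  have := (proj1 (hP _) (FP _ Fx)) k0; lra.
have Px0 : forall k, b k <= pair x0 (A k).
  apply/hP; apply: FP. exact: Fx0.
split.
- move=> Hd y Hy.
  have Hw : forall k, pair x0 (A k) = b k -> 0 <= pair (u *m I) (A k).
    move=> k0 act; rewrite pair_mul; apply: Hd => x Fx; split; first exact: FP.
    move=> p Pp; rewrite -!pair_mul (L1 _ Fx _ act).
    by move/hP: Pp => /(_ k0).
  have [eps [eps0 Heps]] := @tangent _ _ A b x0 _ Px0 Hw.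
  have [_ h] := Hy x0 Fx0.
  have := h _ (proj2 (hP _) Heps); rewrite pair_lin => h2.
  have h3 : 0 <= eps * pair (u *m I) y by lra.
  by rewrite pmulr_rge0 in h3.
- move=> Hd y Hy.
  have Hw : forall k, pair x0 (A k) = b k -> 0 <= pair (u *m I) (A k).
    move=> k0 act; apply: Hd => x Fx; split; first exact: FP.
    move=> p Pp; rewrite (L1 _ Fx _ act).
    by move/hP: Pp => /(_ k0).
  have [eps [eps0 Heps]] := @tangent _ _ A b x0 _ Px0 Hw.
  have [_ h] := Hy u0 Fx0.
  have Pp : restrict i P (u0 + eps *: u).
    by rewrite /restrict mulmxDl -scalemxAl; apply/hP.
  have := h _ Pp; rewrite pair_lin => h2.
  have h3 : 0 <= eps * pair u y by lra.
  by rewrite pmulr_rge0 in h3.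
Qed.
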